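(* Let $n$ be a non-negative integer and $r,s\in\mathbb{C}\setminus\mathbb{Z}^{-}$ with $s\neq0$ and $r-s\notin\mathbb{Z}^{-}$. Then \[ \sum_{k=0}^{n}\binom{n}{k}\frac{1}{(k+2)(k+s)\binom{n+r}{k+s}}=\sum_{k=0}^{n}\binom{n}{k}\frac{(-1)^k}{(k+1)(k+2)(k+s)\binom{k+r}{k+s}}. \]
   Context: $\mathbb{Z}^{-}$ denotes the set of negative integers. Binomial coefficients with complex entries: $\binom{x}{y}=\frac{\Gamma(x+1)}{\Gamma(y+1)\Gamma(x-y+1)}$. *)

(* Defs.v *)
From Stdlib Require Import Reals Arith List.
From Coquelicot Require Import Coquelicot.
Open Scope C_scope.

(* x^z for a real x > 0 and complex z:  exp(z ln x). *)
Definition Cpow_pos (x : R) (z : C) : C :=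
  RtoC (exp (Re z * ln x)) * (cos (Im z * ln x), sin (Im z * ln x)).

Definition gauss_seq (z : C) (m : nat) : C :=
  RtoC (INR (fact m)) * Cpow_pos (INR m) z
  / fold_right Cmult 1 (List.map (fun j => z + RtoC (INR j)) (List.seq 0 (S m))).

(* Complex Gamma function (Gauss' limit formula), valid on C \ {0,-1,-2,...}. *)
Definition CGamma (z : C) : C :=
  @lim (CompleteNormedModule.CompleteSpace _ C_CompleteNormedModule)
       (filtermap (gauss_seq z) eventually).

Definition Cbinom (x y : C) : C :=
  CGamma (x + 1) / (CGamma (y + 1) * CGamma (x - y + 1)).

Definition in_Zneg (z : C) : Prop := exists m : nat, z = RtoC (- INR (S m)).

(* Main.v *)
Require Import Defs.
From Stdlib Require Import Reals Arith Lra Lia List.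
From Coquelicot Require Import Coquelicot.
Open Scope C_scope.


Open Scope C_scope.
Ltac cring := match goal with |- ?a = ?b => change (@eq C a b) end; ring.

Lemma sumC_Sn (a : nat -> C) n : sum_n a (S n) = sum_n a n + a (S n).
Proof. exact (@sum_Sn C_AbelianMonoid a n). Qed.
Lemma sumC_O (a : nat -> C) : sum_n a 0 = a 0%nat.
Proof. exact (@sum_O C_AbelianMonoid a). Qed.
Lemma sumC_ext (a b : nat -> C) n : (forall k, (k <= n)%nat -> a k = b k) -> sum_n a n = sum_n b n.
Proof. exact (@sum_n_ext_loc C_AbelianMonoid a b n). Qed.
Lemma sumC_plus (a b : nat -> C) n : sum_n (fun k => a k + b k) n = sum_n a n + sum_n b n.
Proof. exact (@sum_n_plus C_AbelianMonoid a b n). Qed.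
Lemma sumC_left (a : nat -> C) n : sum_n a (S n) = a 0%nat + sum_n (fun k => a (S k)) n.
Proof.
  induction n.
  - rewrite sumC_Sn, !sumC_O. reflexivity.
  - rewrite sumC_Sn, IHn, sumC_Sn. cring.
Qed.

Lemma pascal_sum (f : nat -> C) n :
  sum_n (fun k => RtoC (Binomial.C (S n) k) * f k) (S n) =
  sum_n (fun k => RtoC (Binomial.C n k) * f k) n +
  sum_n (fun k => RtoC (Binomial.C n k) * f (S k)) n.
Proof.
  destruct n as [|m].
  - rewrite sumC_Sn, !sumC_O. rewrite !C_n_0, C_n_n. cring.
  - rewrite sumC_left. rewrite C_n_0.
    rewrite sumC_Sn.
    rewrite (sumC_ext (fun k => RtoC (Binomial.C (S (S m)) (S k)) * f (S k))
      (fun k => RtoC (Binomial.C (S m) k) * f (S k) + RtoC (Binomial.C (S m) (S k)) * f (S k))).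
    2:{ intros k Hk. rewrite <- pascal by lia. rewrite RtoC_plus. cring. }
    rewrite sumC_plus. rewrite C_n_n.
    rewrite (sumC_left (fun k => RtoC (Binomial.C (S m) k) * f k)).
    rewrite (sumC_Sn (fun k => RtoC (Binomial.C (S m) k) * f (S k))).
    rewrite C_n_0, C_n_n. cring.
Qed.

Fixpoint vw (p k : nat) : R :=
  match k with
  | O => / INR p
  | S k' => (vw p k' * INR (S k') / INR (p + S k'))%R
  end.

Lemma INR_pos_add p k : (1 <= p)%nat -> (0 < INR (p + k))%R.
Proof. intros. apply lt_0_INR. lia. Qed.

Lemma vw_rel p k : (1 <= p)%nat -> vw (S p) k = (vw p k * INR p / INR (p + S k))%R.
Proof.
  intros Hp. induction k.
  - cbn [vw]. assert (0 < INR p)%R by (apply lt_0_INR; lia).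
    replace (p + 1)%nat with (S p) by lia.
    assert (0 < INR (S p))%R by (apply lt_0_INR; lia).
    field. split; lra.
  - cbn [vw]. rewrite IHk.
    assert (H1 : (0 < INR (p + S k))%R) by (apply lt_0_INR; lia).
    assert (H2 : (0 < INR (p + S (S k)))%R) by (apply lt_0_INR; lia).
    assert (H3 : (0 < INR (S p + S k))%R) by (apply lt_0_INR; lia).
    replace (S p + S k)%nat with (p + S (S k))%nat by lia.
    field. lra.
Qed.

Lemma vw_shift p k : (1 <= p)%nat -> vw (S p) k = (vw p k - vw p (S k))%R.
Proof.
  intros Hp. rewrite vw_rel by auto. cbn [vw].
  assert (H1 : (0 < INR (p + S k))%R) by (apply lt_0_INR; lia).
  replace (INR (p + S k)) with (INR p + INR (S k))%R by (rewrite plus_INR; auto).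
  replace (INR (p + S k)) with (INR p + INR (S k))%R in H1 by (rewrite plus_INR; auto).
  field. lra.
Qed.

Lemma comb_main n : forall p (nu : nat -> nat -> C), (1 <= p)%nat ->
  (forall k l, nu k l = nu k (S l) + nu (S k) l) ->
  sum_n (fun k => RtoC (Binomial.C n k) * RtoC (/ INR (k + p)) * nu k (n - k)%nat) n =
  sum_n (fun k => RtoC (Binomial.C n k) * RtoC ((-1)^k) * RtoC (vw p k) * nu k 0%nat) n.
Proof.
  induction n; intros p nu Hp Hnu.
  - rewrite !sumC_O. simpl. rewrite C_n_0. cring.
  - rewrite (sumC_ext _ (fun k => RtoC (Binomial.C (S n) k) *
                 (RtoC (/ INR (k + p)) * nu k (S n - k)%nat))) by (intros; cring).
    rewrite pascal_sum.
    rewrite (sumC_ext (fun k => RtoC (Binomial.C n k) * (RtoC (/ INR (k + p)) * nu k (S n - k)%nat))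
       (fun k => RtoC (Binomial.C n k) * RtoC (/ INR (k + p)) * (fun a b => nu a (S b)) k (n - k)%nat)).
    2:{ intros k Hk. replace (S n - k)%nat with (S (n - k)) by lia. cring. }
    rewrite (sumC_ext (fun k => RtoC (Binomial.C n k) * (RtoC (/ INR (S k + p)) * nu (S k) (S n - S k)%nat))
       (fun k => RtoC (Binomial.C n k) * RtoC (/ INR (k + S p)) * (fun a b => nu (S a) b) k (n - k)%nat)).
    2:{ intros k Hk. replace (S n - S k)%nat with (n - k)%nat by lia.
        replace (S k + p)%nat with (k + S p)%nat by lia. cring. }
    rewrite (IHn p (fun a b => nu a (S b))) by (auto || (intros; apply Hnu)).
    rewrite (IHn (S p) (fun a b => nu (S a) b)) by (auto || (intros; apply Hnu)).
    rewrite (sumC_ext (fun k => RtoC (Binomial.C (S n) k) * RtoC ((-1)^k) * RtoC (vw p k) * nu k 0%nat) (fun k => RtoC (Binomial.C (S n) k) *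
                 (RtoC ((-1)^k) * RtoC (vw p k) * nu k 0%nat))) by (intros; cring).
    rewrite pascal_sum.
    rewrite <- !sumC_plus. apply sumC_ext. intros k Hk.
    rewrite (Hnu k 0%nat). rewrite vw_shift by auto.
    change ((-1)^(S k))%R with (-1 * (-1)^k)%R.
    rewrite !RtoC_minus, !RtoC_mult. cring.
Qed.


Open Scope R_scope.

Lemma sin_approx1 a : sin_approx a 1 = a - a^3/6.
Proof. unfold sin_approx, sin_term. simpl. field. Qed.
Lemma cos_approx1 a : cos_approx a 1 = 1 - a^2/2.
Proof. unfold cos_approx, cos_term. simpl. field. Qed.

Lemma sin_est b : Rabs b <= 1/2 -> Rabs (sin b - b) <= b^2 /\ Rabs (sin b) <= Rabs b.
Proof.
  intros Hb.
  assert (H : forall c, 0 <= c <= 1/2 -> c - c^2 <= sin c <= c).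
  { intros c Hc. destruct (Req_dec c 0) as [->|Hc0].
    - rewrite sin_0. lra.
    - pose proof (pre_sin_bound c 0 ltac:(lra) ltac:(lra)) as [H1 _].
      simpl (2*0+1)%nat in H1. rewrite sin_approx1 in H1.
      pose proof (sin_lt_x c ltac:(lra)). split; [|lra].
      nra. }
  destruct (Rle_dec 0 b).
  - specialize (H b ltac:(split_Rabs; lra)).
    split; split_Rabs; nra.
  - specialize (H (-b) ltac:(split_Rabs; lra)). rewrite sin_neg in H.
    split; split_Rabs; nra.
Qed.

Lemma cos_est b : Rabs b <= 1/2 -> 1 - b^2 <= cos b <= 1.
Proof.
  intros Hb. pose proof (pre_cos_bound b 0 ltac:(split_Rabs; lra) ltac:(split_Rabs; lra)) as [H1 _].
  simpl (2*0+1)%nat in H1. rewrite cos_approx1 in H1.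
  pose proof (COS_bound b). nra.
Qed.

Lemma exp_est a : Rabs a <= 1/2 -> 0 <= exp a - 1 - a <= 2 * a^2 /\ exp a <= 2.
Proof.
  intros Ha.
  pose proof (exp_ineq1_le a). pose proof (exp_ineq1_le (-a)).
  assert (E : exp a * exp (-a) = 1) by (rewrite <- exp_plus; replace (a + - a) with 0 by ring; apply exp_0).
  pose proof (exp_pos a). pose proof (exp_pos (-a)).
  assert (exp a * (1 - a) <= 1) by nra.
  split_Rabs; split; try split; nra.
Qed.


Open Scope C_scope.

Definition cexp (w : C) : C := RtoC (exp (Re w)) * (cos (Im w), sin (Im w)).

Lemma Cpow_cexp x z : Cpow_pos x z = cexp (z * RtoC (ln x)).
Proof. unfold Cpow_pos, cexp. rewrite re_scal_r, im_scal_r. reflexivity. Qed.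

Lemma cexp_plus u v : cexp (u + v) = cexp u * cexp v.
Proof.
  destruct u as [a b], v as [c d]. unfold cexp. simpl.
  rewrite exp_plus, cos_plus, sin_plus.
  apply injective_projections; simpl; ring.
Qed.

Lemma cexp_ln x : (0 < x)%R -> cexp (RtoC (ln x)) = RtoC x.
Proof.
  intros Hx. unfold cexp. simpl. rewrite exp_ln by auto. rewrite cos_0, sin_0.
  apply injective_projections; simpl; ring.
Qed.

Lemma Cmod_le_sum (x y : R) : (Cmod (x, y) <= Rabs x + Rabs y)%R.
Proof.
  unfold Cmod. simpl. rewrite <- (sqrt_Rsqr (Rabs x + Rabs y)).
  2:{ pose proof (Rabs_pos x); pose proof (Rabs_pos y); lra. }
  apply sqrt_le_1_alt. unfold Rsqr. pose proof (Rabs_pos x); pose proof (Rabs_pos y).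
  replace (x * (x*1) + y * (y * 1))%R with (Rabs x * Rabs x + Rabs y * Rabs y)%R.
  2:{ rewrite <- !Rabs_mult. rewrite !Rabs_right by nra. ring. }
  nra.
Qed.

Lemma Cmod_sq (x y : R) : (Cmod (x, y) ^ 2 = x^2 + y^2)%R.
Proof.
  unfold Cmod. simpl fst. simpl snd. apply pow2_sqrt. nra.
Qed.

Lemma cexp_est w : (Cmod w <= 1/2)%R -> (Cmod (cexp w - 1 - w) <= 4 * Cmod w ^ 2)%R.
Proof.
  destruct w as [a b]. intros Hw.
  assert (Ha : (Rabs a <= 1/2)%R) by (eapply Rle_trans; [apply (re_le_Cmod (a,b)) | exact Hw]).
  assert (Hb : (Rabs b <= 1/2)%R).
  { eapply Rle_trans; [|exact Hw]. pose proof (Rmax_Cmod (a,b)). simpl in H.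
    eapply Rle_trans; [|exact H]. apply Rmax_r. }
  rewrite Cmod_sq.
  unfold cexp. simpl Re. simpl Im.
  replace (RtoC (exp a) * (cos b, sin b) - 1 - (a, b)) with
     (((exp a * cos b - 1 - a)%R, (exp a * sin b - b)%R) : C).
  2:{ apply injective_projections; simpl; ring. }
  eapply Rle_trans; [apply Cmod_le_sum|].
  destruct (exp_est a Ha) as [E1 E2]. destruct (cos_est b Hb) as [C1 C2].
  destruct (sin_est b Hb) as [S1 S2].
  assert (P : (0 < exp a)%R) by apply exp_pos.
  assert (R1 : (Rabs (exp a * cos b - 1 - a) <= 2 * a^2 + 2 * b^2)%R).
  { replace (exp a * cos b - 1 - a)%R with ((exp a - 1 - a) + exp a * (cos b - 1))%R by ring.
    eapply Rle_trans; [apply Rabs_triang|]. rewrite Rabs_mult.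
    rewrite (Rabs_right (exp a)) by lra.
    assert (Rabs (cos b - 1) <= b^2)%R by (split_Rabs; lra).
    assert (Rabs (exp a - 1 - a) <= 2 * a^2)%R by (split_Rabs; lra).
    nra. }
  assert (R2 : (Rabs (exp a * sin b - b) <= a^2 + 2 * b^2)%R).
  { replace (exp a * sin b - b)%R with ((exp a - 1) * sin b + (sin b - b))%R by ring.
    eapply Rle_trans; [apply Rabs_triang|]. rewrite Rabs_mult.
    assert (Rabs (exp a - 1) <= 2 * Rabs a)%R by (split_Rabs; nra).
    assert (Rabs (exp a - 1) * Rabs (sin b) <= 2 * Rabs a * Rabs b)%R.
    { apply Rmult_le_compat; try apply Rabs_pos; lra. }
    assert (2 * Rabs a * Rabs b <= a^2 + b^2)%R.
    { assert (a^2 = Rabs a ^2)%R by (split_Rabs; ring).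
      assert (b^2 = Rabs b ^2)%R by (split_Rabs; ring).
      pose proof (pow2_ge_0 (Rabs a - Rabs b)). nra. }
    lra. }
  lra.
Qed.


Open Scope R_scope.

Lemma inv_sq_bound (x : R) : 2 <= x -> / x ^ 2 <= / (x - 1) - / x.
Proof.
  intros Hx. assert (0 < x - 1) by lra.
  replace (/ (x - 1) - / x) with (/ (x * (x - 1))) by (field; lra).
  apply Rinv_le_contravar. nra. simpl. nra.
Qed.

Section Cauchy.
Variable a : nat -> C.
Variable K : R.
Variable m0 : nat.
Hypothesis HK : 0 <= K.
Hypothesis Hm0 : (2 <= m0)%nat.
Hypothesis Hrat : forall m, (m0 <= m)%nat -> Cmod (a (S m) - a m) <= K / INR m ^ 2 * Cmod (a m).

Lemma INR_ge2 m : (m0 <= m)%nat -> 2 <= INR m.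
Proof. intros. replace 2 with (INR 2) by (simpl; ring). apply le_INR. lia. Qed.

Lemma step_bound m : (m0 <= m)%nat -> K / INR m ^ 2 <= K * (/ (INR m - 1) - / INR m).
Proof.
  intros Hm. unfold Rdiv. apply Rmult_le_compat_l; auto. apply inv_sq_bound. apply INR_ge2; auto.
Qed.

Lemma growth j : Cmod (a (m0 + j)%nat) <= Cmod (a m0) * exp (K * (/ (INR m0 - 1) - / (INR (m0 + j) - 1))).
Proof.
  induction j.
  - rewrite Nat.add_0_r. replace (K * (/ (INR m0 - 1) - / (INR m0 - 1))) with 0 by ring.
    rewrite exp_0. lra.
  - replace (m0 + S j)%nat with (S (m0 + j)) by lia.
    set (m := (m0 + j)%nat) in *.
    assert (Hm : (m0 <= m)%nat) by lia.
    pose proof (Hrat m Hm) as H1.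
    pose proof (step_bound m Hm) as H2.
    pose proof (INR_ge2 m Hm) as H3.
    assert (H4 : Cmod (a (S m)) <= Cmod (a m) * (1 + K / INR m ^ 2)).
    { replace (a (S m)) with (a m + (a (S m) - a m))%C by ring.
      eapply Rle_trans; [apply Cmod_triangle|]. pose proof (Cmod_ge_0 (a m)). nra. }
    pose proof (exp_ineq1_le (K / INR m ^ 2)).
    pose proof (Cmod_ge_0 (a m)).
    assert (H5 : Cmod (a (S m)) <= Cmod (a m) * exp (K * (/ (INR m - 1) - / INR m))).
    { eapply Rle_trans; [exact H4|]. apply Rmult_le_compat_l; auto.
      eapply Rle_trans; [exact H|].
      destruct (Rle_lt_or_eq_dec _ _ H2) as [Hlt|Heq]; [apply Rlt_le, exp_increasing, Hlt | rewrite Heq; lra]. }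
    eapply Rle_trans; [exact H5|].
    eapply Rle_trans; [apply Rmult_le_compat_r; [apply Rlt_le, exp_pos| exact IHj]|].
    rewrite Rmult_assoc, <- exp_plus. rewrite S_INR.
    replace (INR m + 1 - 1) with (INR m) by ring. right. f_equal. f_equal. ring.
Qed.

Definition Bnd := Cmod (a m0) * exp (K * / (INR m0 - 1)).

Lemma Bnd_pos : 0 <= Bnd.
Proof. unfold Bnd. pose proof (Cmod_ge_0 (a m0)). pose proof (exp_pos (K * / (INR m0 - 1))). nra. Qed.

Lemma bounded m : (m0 <= m)%nat -> Cmod (a m) <= Bnd.
Proof.
  intros Hm. replace m with (m0 + (m - m0))%nat by lia.
  eapply Rle_trans; [apply growth|]. unfold Bnd. apply Rmult_le_compat_l; [apply Cmod_ge_0|].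
  pose proof (INR_ge2 (m0 + (m - m0)) ltac:(lia)).
  assert (0 <= K * / (INR (m0 + (m - m0)) - 1)).
  { apply Rmult_le_pos; auto. apply Rlt_le, Rinv_0_lt_compat. lra. }
  destruct (Rle_lt_or_eq_dec (K * (/ (INR m0 - 1) - / (INR (m0 + (m - m0)) - 1))) (K * / (INR m0 - 1))) as [Hlt|Heq].
  - lra.
  - apply Rlt_le, exp_increasing, Hlt.
  - rewrite Heq. lra.
Qed.

Lemma diff_bound N j : (m0 <= N)%nat ->
  Cmod (a (N + j)%nat - a N) <= Bnd * K * (/ (INR N - 1) - / (INR (N + j) - 1)).
Proof.
  intros HN. induction j.
  - rewrite Nat.add_0_r. replace (a N - a N)%C with (RtoC 0) by ring. rewrite Cmod_0.
    right. ring.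
  - replace (N + S j)%nat with (S (N + j)) by lia. set (m := (N + j)%nat) in *.
    assert (Hm : (m0 <= m)%nat) by lia.
    replace (a (S m) - a N)%C with ((a (S m) - a m) + (a m - a N))%C by ring.
    eapply Rle_trans; [apply Cmod_triangle|].
    pose proof (Hrat m Hm). pose proof (bounded m Hm). pose proof (step_bound m Hm).
    pose proof (INR_ge2 m Hm).
    assert (0 <= K / INR m ^ 2). { unfold Rdiv. apply Rmult_le_pos; auto. apply Rlt_le, Rinv_0_lt_compat. nra. }
    assert (Cmod (a (S m) - a m) <= Bnd * K * (/ (INR m - 1) - / INR m)).
    { eapply Rle_trans; [eassumption|]. pose proof Bnd_pos. pose proof (Cmod_ge_0 (a m)).
      replace (Bnd * K * (/ (INR m - 1) - / INR m)) with (Bnd * (K * (/ (INR m - 1) - / INR m))) by ring.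
      rewrite Rmult_comm. apply Rmult_le_compat; auto. }
    rewrite S_INR. replace (INR m + 1 - 1) with (INR m) by ring. lra.
Qed.

Lemma cauchy_ratio : forall eps : posreal, exists x, eventually (fun n => Cmod (a n - x) < eps).
Proof.
  intros eps. destruct (INR_unbounded (Bnd * K / eps + 1)) as [N0 HN0].
  set (N := (N0 + m0)%nat). exists (a N). exists N. intros n Hn.
  assert (HN : (m0 <= N)%nat) by (unfold N; lia).
  replace n with (N + (n - N))%nat by lia.
  eapply Rle_lt_trans; [apply diff_bound; auto|].
  pose proof (INR_ge2 N HN). pose proof (INR_ge2 (N + (n - N)) ltac:(lia)).
  assert (INR N0 <= INR N) by (apply le_INR; unfold N; lia).
  pose proof Bnd_pos. pose proof (cond_pos eps).
  assert (0 <= Bnd * K) by nra.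
  assert (0 < / (INR (N + (n - N)) - 1)) by (apply Rinv_0_lt_compat; lra).
  assert (Bnd * K * / (INR N - 1) < eps).
  { apply (Rmult_lt_reg_r (INR N - 1)); [lra|]. rewrite Rmult_assoc, Rinv_l by lra.
    assert (Bnd * K / eps < INR N - 1) by lra.
    apply (Rmult_lt_compat_r eps) in H6; auto. unfold Rdiv in H6.
    rewrite Rmult_assoc, Rinv_l in H6 by lra. lra. }
  nra.
Qed.
End Cauchy.


Open Scope C_scope.

Definition Dp (z : C) (m : nat) : C :=
  fold_right Cmult 1 (map (fun j => z + RtoC (INR j)) (seq 0 (S m))).

Lemma fold_seq_S (f : nat -> C) k n :
  fold_right Cmult 1 (map f (seq k (S n))) = fold_right Cmult 1 (map f (seq k n)) * f (k + n)%nat.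
Proof.
  revert k. induction n; intros k.
  - simpl. rewrite Nat.add_0_r. ring.
  - change (seq k (S (S n))) with (k :: seq (S k) (S n)).
    change (seq k (S n)) with (k :: seq (S k) n).
    cbn [map fold_right]. rewrite IHn. replace (S k + n)%nat with (k + S n)%nat by lia. ring.
Qed.

Lemma Dp_S z m : Dp z (S m) = Dp z m * (z + RtoC (INR (S m))).
Proof. unfold Dp. rewrite fold_seq_S. reflexivity. Qed.

Lemma Cinv_0 : Cinv 0 = 0.
Proof. unfold Cinv. simpl. apply injective_projections; simpl; unfold Rdiv; ring.
Qed.

Lemma gauss_eq z m : gauss_seq z m = RtoC (INR (fact m)) * Cpow_pos (INR m) z / Dp z m.
Proof. reflexivity. Qed.

Lemma Cpow_S z m : (1 <= m)%nat ->
  Cpow_pos (INR (S m)) z = Cpow_pos (INR m) z * cexp (z * RtoC (ln (INR (S m)) - ln (INR m))).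
Proof.
  intros Hm. rewrite !Cpow_cexp, <- cexp_plus. f_equal. rewrite RtoC_minus. ring.
Qed.

Lemma gauss_ratio z m : (1 <= m)%nat -> z + RtoC (INR (S m)) <> 0 ->
  gauss_seq z (S m) = gauss_seq z m *
    (RtoC (INR (S m)) * cexp (z * RtoC (ln (INR (S m)) - ln (INR m))) / (z + RtoC (INR (S m)))).
Proof.
  intros Hm Hz. rewrite !gauss_eq, Dp_S, Cpow_S by auto.
  rewrite fact_simpl, mult_INR, RtoC_mult.
  destruct (Ceq_dec (Dp z m) 0) as [H0|H0].
  - rewrite H0. unfold Cdiv. rewrite Cmult_0_l, Cinv_0. ring.
  - field. split; auto.
Qed.

Definition Kz (z : C) : R := (2 * (8 * Cmod z ^ 2 + Cmod z))%R.

Lemma ln_le_m1 y : (0 < y)%R -> (ln y <= y - 1)%R.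
Proof. intros Hy. pose proof (exp_ineq1_le (ln y)). rewrite exp_ln in H by auto. lra. Qed.

Lemma L_bounds x : (1 <= x)%R -> (/ (x + 1) <= ln (x + 1) - ln x <= / x)%R.
Proof.
  intros Hx. split.
  - rewrite <- ln_div by lra. 
    pose proof (ln_le_m1 (x / (x+1)) ltac:(apply Rdiv_lt_0_compat; lra)).
    rewrite ln_div in H by lra. rewrite ln_div by lra.
    replace (x / (x + 1) - 1)%R with (- / (x+1))%R in H by (field; lra). lra.
  - rewrite <- ln_div by lra.
    pose proof (ln_le_m1 ((x+1) / x) ltac:(apply Rdiv_lt_0_compat; lra)).
    replace ((x + 1) / x - 1)%R with (/ x)%R in H by (field; lra). lra.
Qed.

Lemma t_est z (x : R) : (1 <= x)%R -> (2 * Cmod z + 2 <= x)%R ->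
  (Cmod (RtoC (x + 1) * cexp (z * RtoC (ln (x + 1) - ln x)) / (z + RtoC (x + 1)) - 1) <= Kz z / x ^ 2)%R.
Proof.
  intros Hx1 Hx2.
  set (L := (ln (x + 1) - ln x)%R).
  pose proof (L_bounds x Hx1) as [HL1 HL2]. fold L in HL1, HL2.
  set (c := Cmod z) in *. assert (Hc : (0 <= c)%R) by apply Cmod_ge_0.
  assert (Hx0 : (0 < x)%R) by lra.
  assert (HL0 : (0 < L)%R). { eapply Rlt_le_trans; [|exact HL1]. apply Rinv_0_lt_compat; lra. }
  assert (HLx : (L * x <= 1)%R). { apply (Rmult_le_compat_r x) in HL2; [|lra]. rewrite Rinv_l in HL2 by lra. lra. }
  assert (HLx1 : (1 <= L * (x + 1))%R). { apply (Rmult_le_compat_r (x+1)) in HL1; [|lra]. rewrite Rinv_l in HL1 by lra. lra. }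
  set (u := (z * RtoC L)%C).
  assert (Hu : (Cmod u = c * L)%R). { unfold u. rewrite Cmod_mult, Cmod_R, Rabs_pos_eq by lra. reflexivity. }
  assert (HcL : (c * L * x <= c)%R) by nra.
  assert (Hu2 : (Cmod u <= 1/2)%R).
  { rewrite Hu. assert (c * L * x <= x / 2)%R by lra. apply (Rmult_le_reg_r x); lra. }
  set (den := (z + RtoC (x + 1))%C).
  assert (Hden : (x / 2 <= Cmod den)%R).
  { assert (E : RtoC (x + 1) = (den + - z)%C) by (unfold den; ring).
    pose proof (Cmod_triangle den (- z)). rewrite <- E in H.
    rewrite Cmod_R, Rabs_pos_eq in H by lra. 
    rewrite Cmod_opp in H. fold c in H. lra. }
  assert (Hden0 : den <> 0).
  { intro H0. rewrite H0, Cmod_0 in Hden. lra. }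
  set (num := (RtoC (x + 1) * (cexp u - 1 - u) + RtoC (L * (x + 1) - 1) * z)%C).
  replace (RtoC (x + 1) * cexp u / den - 1)%C with (num / den)%C.
  2:{ unfold num, den, u. rewrite !RtoC_minus, !RtoC_mult, RtoC_plus. field.
      intro E; apply Hden0; unfold den; rewrite RtoC_plus; cbv beta in E; exact E. }
  rewrite Cmod_div by auto.
  assert (Hnum : (Cmod num <= (8 * c ^ 2 + c) / x)%R).
  { unfold num. eapply Rle_trans; [apply Cmod_triangle|]. rewrite !Cmod_mult, !Cmod_R.
    rewrite (Rabs_pos_eq (x+1)) by lra. rewrite (Rabs_pos_eq (L * (x + 1) - 1)) by lra.
    pose proof (cexp_est u Hu2) as He. rewrite Hu in He. fold c.
    assert (T1 : ((x + 1) * Cmod (cexp u - 1 - u) <= 8 * c^2 / x)%R).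
    { eapply Rle_trans. apply Rmult_le_compat_l; [lra| exact He].
      assert (c * L <= c / x)%R.
      { unfold Rdiv. apply Rmult_le_compat_l; auto. }
      assert (0 <= c * L)%R by nra.
      assert ((c * L)^2 <= (c/x)^2)%R by (apply pow_incr; auto).
      assert ((x+1) * (c / x)^2 <= 2 * c^2 / x)%R.
      { replace ((x+1) * (c/x)^2)%R with ((x + 1) / x * (c^2 / x))%R by (field; lra).
        replace (2 * c^2 / x)%R with (2 * (c^2 / x))%R by (field; lra).
        apply Rmult_le_compat_r. apply Rmult_le_pos; [nra| apply Rlt_le, Rinv_0_lt_compat; lra].
        apply (Rmult_le_reg_r x); [lra|]. unfold Rdiv. rewrite Rmult_assoc, Rinv_l by lra. lra. }
      nra. }
    assert (T2 : ((L * (x + 1) - 1) * c <= c / x)%R).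
    { assert (L * (x+1) - 1 <= / x)%R.
      { apply (Rmult_le_reg_r x); [lra|]. rewrite Rinv_l by lra. nra. }
      unfold Rdiv. rewrite Rmult_comm. apply Rmult_le_compat_l; auto. }
    unfold Rdiv in *. lra. }
  unfold Kz. fold c.
  assert (0 <= (8 * c ^ 2 + c) / x)%R by (apply Rdiv_le_0_compat; nra).
  apply (Rle_trans _ (((8 * c ^ 2 + c) / x) / (x / 2))).
  - unfold Rdiv at 1 3. apply Rmult_le_compat; auto.
    + apply Cmod_ge_0.
    + apply Rlt_le, Rinv_0_lt_compat. lra.
    + apply Rinv_le_contravar; lra.
  - right. field. lra.
Qed.

Lemma CGamma_lim_gen (a : nat -> C) :
  (forall eps : posreal, exists x : C, eventually (fun n => (Cmod (a n - x) < eps)%R)) ->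
  filterlim a eventually (locally (@lim (CompleteNormedModule.CompleteSpace _ C_CompleteNormedModule)
       (filtermap a eventually))).
Proof.
  intros H.
  pose proof (@complete_cauchy (CompleteNormedModule.CompleteSpace _ C_CompleteNormedModule) (filtermap a eventually) (filtermap_proper_filter _ _ _ _ eventually_filter)) as HC.
  apply filterlim_locally. intros eps. apply HC.
  intros e. destruct (H e) as [x Hx]. exists x. unfold filtermap.
  eapply filter_imp; [|exact Hx]. intros n Hn. simpl in Hn.
  apply (norm_compat1 (K:=C_AbsRing) (V:=C_NormedModule)). exact Hn.
Qed.

Lemma gauss_conv z : filterlim (gauss_seq z) eventually (locally (CGamma z)).
Proof.
  apply CGamma_lim_gen.
  destruct (INR_unbounded (2 * Cmod z + 2)) as [N0 HN0].
  apply (cauchy_ratio (gauss_seq z) (Kz z) (N0 + 2)).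
  - unfold Kz. pose proof (Cmod_ge_0 z). nra.
  - lia.
  - intros m Hm.
    assert (Hx : (2 * Cmod z + 2 <= INR m)%R).
    { assert (INR N0 <= INR m)%R by (apply le_INR; lia). lra. }
    assert (Hx1 : (1 <= INR m)%R).
    { replace 1%R with (INR 1) by reflexivity. apply le_INR. lia. }
    assert (Hnz : z + RtoC (INR (S m)) <> 0).
    { intro E. assert (E2 : RtoC (INR (S m)) = - z) by (rewrite <- (Cplus_0_l (- z)), <- E; ring).
      apply (f_equal Cmod) in E2. rewrite Cmod_R, Cmod_opp, Rabs_pos_eq in E2 by apply pos_INR.
      rewrite S_INR in E2. pose proof (Cmod_ge_0 z). lra. }
    rewrite gauss_ratio by (auto || lia).
    replace (gauss_seq z m * (RtoC (INR (S m)) * cexp (z * RtoC (ln (INR (S m)) - ln (INR m))) / (z + RtoC (INR (S m)))) - gauss_seq z m)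
      with (gauss_seq z m * (RtoC (INR (S m)) * cexp (z * RtoC (ln (INR (S m)) - ln (INR m))) / (z + RtoC (INR (S m))) - 1)) by ring.
    rewrite Cmod_mult, Rmult_comm. apply Rmult_le_compat_r; [apply Cmod_ge_0|].
    rewrite S_INR. apply t_est; auto.
Qed.


Open Scope C_scope.

Lemma Dp_shift z m : Dp z (S m) = z * Dp (z + 1) m.
Proof.
  unfold Dp. change (seq 0 (S (S m))) with (0%nat :: seq 1 (S m)).
  rewrite <- seq_shift. cbn [map fold_right]. rewrite map_map.
  replace (z + RtoC (INR 0)) with z by (simpl; ring). f_equal.
  f_equal. apply map_ext. intros j. rewrite S_INR, RtoC_plus. ring.
Qed.

Lemma Dp_nz z m : (forall j, z + RtoC (INR j) <> 0) -> Dp z m <> 0.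
Proof.
  intros H. induction m.
  - unfold Dp. pose proof (H 0%nat) as H0. simpl in H0 |- *. rewrite Cmult_1_r. exact H0.
  - rewrite Dp_S. apply Cmult_neq_0; auto.
Qed.

Lemma Cpow_plus1 x z : (0 < x)%R -> Cpow_pos x (z + 1) = Cpow_pos x z * RtoC x.
Proof.
  intros Hx. rewrite !Cpow_cexp. rewrite <- (cexp_ln x Hx). rewrite <- cexp_plus. f_equal. ring.
Qed.

Lemma gauss_shift z m : (1 <= m)%nat -> (forall j, z + RtoC (INR j) <> 0) ->
  gauss_seq (z + 1) m = gauss_seq z m * (z * RtoC (INR m) / (z + RtoC (INR (S m)))).
Proof.
  intros Hm H. rewrite !gauss_eq. rewrite Cpow_plus1 by (apply lt_0_INR; lia).
  pose proof (Dp_nz z m H). pose proof (H (S m)). pose proof (H 0%nat) as Hz0.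
  replace (z + RtoC (INR 0)) with z in Hz0 by (simpl; ring).
  assert (E : Dp (z + 1) m = Dp z m * (z + RtoC (INR (S m))) / z).
  { rewrite <- Dp_S, Dp_shift. field. auto. }
  rewrite E. field. repeat split; auto.
Qed.

Lemma cseq_lim z : filterlim (fun m : nat => z * RtoC (INR m) / (z + RtoC (INR (S m)))) eventually (locally z).
Proof.
  apply filterlim_locally. intros eps.
  set (A := Cmod (z * (z + 1))).
  destruct (INR_unbounded (A / eps + Cmod z + 1)) as [N HN].
  exists N. intros m Hm.
  apply (norm_compat1 (K:=C_AbsRing) (V:=C_NormedModule)).
  change (Cmod (z * RtoC (INR m) / (z + RtoC (INR (S m))) - z) < eps)%R.
  assert (HmN : (INR N <= INR m)%R) by (apply le_INR; lia).
  pose proof (Cmod_ge_0 z). pose proof (cond_pos eps).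
  assert (HA : (0 <= A)%R) by apply Cmod_ge_0.
  assert (Hd : (INR (S m) - Cmod z <= Cmod (z + RtoC (INR (S m))))%R).
  { pose proof (Cmod_triangle (z + RtoC (INR (S m))) (- z)).
    replace (z + RtoC (INR (S m)) + - z) with (RtoC (INR (S m))) in H1 by ring.
    rewrite Cmod_R, Rabs_pos_eq, Cmod_opp in H1 by apply pos_INR. lra. }
  pose proof Hd as Hd'. rewrite S_INR in Hd'.
  assert (HAe : (A / eps < INR m + 1 - Cmod z)%R) by lra.
  assert (Hpos : (0 < INR m + 1 - Cmod z)%R).
  { assert (0 <= A / eps)%R by (apply Rdiv_le_0_compat; lra). lra. }
  assert (Hnz : z + RtoC (INR (S m)) <> 0).
  { intro E. rewrite E, Cmod_0 in Hd. rewrite S_INR in Hd. lra. }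
  replace (z * RtoC (INR m) / (z + RtoC (INR (S m))) - z) with (- (z * (z + 1)) / (z + RtoC (INR (S m)))).
  2:{ rewrite S_INR, RtoC_plus. field. contradict Hnz. rewrite S_INR, RtoC_plus. cbv beta in Hnz. rewrite <- Hnz. ring. }
  rewrite Cmod_div, Cmod_opp by auto. fold A.
  apply (Rle_lt_trans _ (A / (INR m + 1 - Cmod z))).
  - unfold Rdiv. apply Rmult_le_compat_l; auto. apply Rinv_le_contravar; [lra|]. rewrite <- S_INR. exact Hd.
  - apply (Rmult_lt_reg_r (INR m + 1 - Cmod z)); auto. unfold Rdiv.
    rewrite Rmult_assoc, Rinv_l by lra.
    apply (Rmult_lt_compat_r eps) in HAe; auto. unfold Rdiv in HAe.
    rewrite Rmult_assoc, Rinv_l in HAe by lra. lra.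
Qed.

Lemma filterlim_Cmult (f g : nat -> C) a b :
  filterlim f eventually (locally a) -> filterlim g eventually (locally b) ->
  filterlim (fun n => f n * g n) eventually (locally (a * b)).
Proof.
  intros Hf Hg P HP.
  apply locally_C in HP.
  pose proof (filterlim_mult (K:=C_AbsRing) a b P HP) as [Q R HQ HR HQR].
  apply locally_C in HQ. apply locally_C in HR.
  pose proof (Hf Q HQ) as E1. pose proof (Hg R HR) as E2.
  unfold filtermap in *.
  eapply filter_imp; [|exact (filter_and _ _ E1 E2)].
  intros n [H1 H2]. exact (HQR _ _ H1 H2).
Qed.

Lemma CGamma_succ z : (forall j, z + RtoC (INR j) <> 0) -> CGamma (z + 1) = z * CGamma z.
Proof.
  intros H.
  apply (filterlim_locally_unique (K:=C_AbsRing) (V:=C_NormedModule) (F:=eventually) (gauss_seq (z + 1))).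
  - apply gauss_conv.
  - eapply filterlim_ext_loc.
    + exists 1%nat. intros m Hm. symmetry. apply gauss_shift; auto.
    + rewrite Cmult_comm.
      apply filterlim_Cmult.
      * apply gauss_conv.
      * apply cseq_lim.
Qed.


Open Scope C_scope.

Fixpoint poch (w : C) (k : nat) : C :=
  match k with O => 1 | S k' => poch w k' * (w + RtoC (INR k')) end.

Definition nonpole (w : C) := forall j : nat, w + RtoC (INR j) <> 0.

Lemma nonpole_shift w k : nonpole w -> nonpole (w + RtoC (INR k)).
Proof.
  intros H j E. apply (H (k + j)%nat). rewrite plus_INR, RtoC_plus. rewrite <- E. ring.
Qed.

Lemma poch_nz w k : nonpole w -> poch w k <> 0.
Proof. intros H. induction k; simpl. - intro E. injection E. lra. - apply Cmult_neq_0; auto. Qed.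

Lemma CGamma_poch w k : nonpole w -> CGamma (w + RtoC (INR k)) = poch w k * CGamma w.
Proof.
  intros H. induction k.
  - simpl. replace (w + RtoC 0) with w by ring. ring.
  - replace (w + RtoC (INR (S k))) with ((w + RtoC (INR k)) + 1) by (rewrite S_INR, RtoC_plus; ring).
    rewrite CGamma_succ by (apply nonpole_shift; auto). rewrite IHk. simpl. ring.
Qed.

Lemma poch_shift w k : poch w (S k) = w * poch (w + 1) k.
Proof.
  induction k.
  - simpl. replace (w + RtoC 0) with w by ring. ring.
  - change (poch w (S (S k))) with (poch w (S k) * (w + RtoC (INR (S k)))).
    rewrite IHk. cbn [poch]. rewrite S_INR, RtoC_plus. ring.
Qed.

Lemma not_Zneg_nonpole w : ~ in_Zneg w -> nonpole (w + 1).
Proof.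
  intros H j E. apply H. exists j. rewrite RtoC_opp, S_INR, RtoC_plus.
  transitivity (w + 1 + RtoC (INR j) - (RtoC (INR j) + 1)); [ring|]. rewrite E. ring.
Qed.

Lemma vw2 k : vw 2 k = (/ ((INR k + 1) * (INR k + 2)))%R.
Proof.
  induction k.
  - cbn [vw]. change (INR 0) with 0%R. change (INR 2) with (1+1)%R. field.
  - cbn [vw]. rewrite IHk.
    assert (E : INR (2 + S k) = (INR k + 3)%R).
    { rewrite plus_INR, (S_INR k). change (INR 2) with (1+1)%R. ring. }
    rewrite E, (S_INR k).
    pose proof (pos_INR k). field. repeat split; lra.
Qed.


Open Scope C_scope.

Lemma sumC_zero (a : nat -> C) n : (forall k, (k <= n)%nat -> a k = 0) -> @eq C (sum_n a n) 0.
Proof.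
  revert a. induction n; intros a H.
  - rewrite sumC_O. apply H. lia.
  - rewrite sumC_Sn, IHn. rewrite H by lia. ring. intros; apply H; lia.
Qed.

Lemma sumC_mult_l (c : C) (a : nat -> C) n : @eq C (sum_n (fun k => c * a k) n) (c * sum_n a n).
Proof. exact (@sum_n_mult_l C_Ring c a n). Qed.

Lemma div_zero3 (a b c : C) : a = 0 \/ b = 0 \/ c = 0 -> a / (b * c) = 0.
Proof.
  intros [H|[H|H]]; subst; unfold Cdiv.
  - ring.
  - rewrite Cmult_0_l, Cinv_0. ring.
  - rewrite Cmult_0_r, Cinv_0. ring.
Qed.

Lemma div_by0 (x y : C) : x / (y * 0) = 0.
Proof. unfold Cdiv. rewrite Cmult_0_r, Cinv_0. ring. Qed.

Definition nu (a b c : C) (k l : nat) : C := poch a k * poch b l / poch c (k + l).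

Lemma nu_rec a b c k l : c = a + b -> nonpole c ->
  nu a b c k l = nu a b c k (S l) + nu a b c (S k) l.
Proof.
  intros Hc Hn. unfold nu. rewrite Nat.add_succ_r. simpl (S k + l)%nat.
  cbn [poch]. pose proof (poch_nz c (k + l) Hn). pose proof (Hn (k + l)%nat).
  rewrite plus_INR, RtoC_plus in *. subst c. field. auto.
Qed.

Theorem theorem20 (n : nat) (r s : C) :
  ~ in_Zneg r -> ~ in_Zneg s -> s <> 0 -> ~ in_Zneg (r - s) ->
  sum_n (fun k : nat =>
           RtoC (Binomial.C n k)
           / ((RtoC (INR k) + 2) * (RtoC (INR k) + s)
              * Cbinom (RtoC (INR n) + r) (RtoC (INR k) + s))) n
  = sum_n (fun k : nat =>
           RtoC (Binomial.C n k) * RtoC ((-1) ^ k)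
           / ((RtoC (INR k) + 1) * (RtoC (INR k) + 2) * (RtoC (INR k) + s)
              * Cbinom (RtoC (INR k) + r) (RtoC (INR k) + s))) n.
Proof.
  intros Hr Hs Hs0 Hrs.
  pose proof (not_Zneg_nonpole r Hr) as Nr1.
  pose proof (not_Zneg_nonpole s Hs) as Ns1.
  pose proof (not_Zneg_nonpole (r - s) Hrs) as Nrs.
  assert (Ns : nonpole s).
  { intros [|j].
    - change (INR 0) with 0%R. replace (s + RtoC 0) with s by ring. auto.
    - intro E. apply (Ns1 j). rewrite <- E. rewrite S_INR, RtoC_plus. ring. }
  set (A := CGamma (s + 1)). set (B := CGamma (r + 1)). set (D := CGamma (r - s + 1)).
  assert (Eb1 : forall k, (k <= n)%nat -> Cbinom (RtoC (INR n) + r) (RtoC (INR k) + s) =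
      (poch (r + 1) n * B) / ((poch (s + 1) k * A) * (poch (r - s + 1) (n - k) * D))).
  { intros k Hk. unfold Cbinom.
    replace (RtoC (INR n) + r + 1) with ((r + 1) + RtoC (INR n)) by ring.
    replace (RtoC (INR k) + s + 1) with ((s + 1) + RtoC (INR k)) by ring.
    replace (RtoC (INR n) + r - (RtoC (INR k) + s) + 1) with ((r - s + 1) + RtoC (INR (n - k)))
      by (rewrite minus_INR by lia; rewrite RtoC_minus; ring).
    rewrite !CGamma_poch by auto. reflexivity. }
  assert (Eb2 : forall k, Cbinom (RtoC (INR k) + r) (RtoC (INR k) + s) =
      (poch (r + 1) k * B) / ((poch (s + 1) k * A) * D)).
  { intros k. unfold Cbinom.
    replace (RtoC (INR k) + r + 1) with ((r + 1) + RtoC (INR k)) by ring.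
    replace (RtoC (INR k) + s + 1) with ((s + 1) + RtoC (INR k)) by ring.
    replace (RtoC (INR k) + r - (RtoC (INR k) + s) + 1) with (r - s + 1) by ring.
    rewrite !CGamma_poch by auto. reflexivity. }
  destruct (Ceq_dec A 0) as [HA|HA]; [|destruct (Ceq_dec B 0) as [HB|HB];
    [|destruct (Ceq_dec D 0) as [HD|HD]]].
  1,2,3: transitivity (RtoC 0); [apply sumC_zero | symmetry; apply sumC_zero]; intros k Hk;
    apply div_zero3; right; right; [rewrite Eb1 by lia | rewrite Eb2]; apply div_zero3;
    try (left; rewrite HB; ring); try (right; left; rewrite HA; ring);
    try (right; right; rewrite HD; ring); try (right; right; exact HD).
  assert (Hpc : forall k, poch (r + 1) k <> 0) by (intros; apply poch_nz; auto).
  assert (Hpb : forall k, poch (r - s + 1) k <> 0) by (intros; apply poch_nz; auto).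
  assert (Hps : forall k, poch s k <> 0) by (intros; apply poch_nz; auto).
  assert (Hps1 : forall k, poch (s + 1) k = poch s k * (s + RtoC (INR k)) / s).
  { intros k. pose proof (poch_shift s k) as E. cbn [poch] in E. rewrite E. field. auto. }
  assert (Hks : forall k, RtoC (INR k) + s <> 0).
  { intros k E. apply (Ns k). rewrite <- E. ring. }
  assert (Hk2 : forall k, RtoC (INR k) + RtoC 2 <> 0).
  { intros k E. rewrite <- RtoC_plus in E. injection E. pose proof (pos_INR k). lra. }
  assert (Hk1 : forall k, RtoC (INR k) + RtoC 1 <> 0).
  { intros k E. rewrite <- RtoC_plus in E. injection E. pose proof (pos_INR k). lra. }
  assert (I2 : INR 2 = 2%R) by (simpl; ring).
  set (K := A * D / (s * B)).
  transitivity (K * sum_n (fun k => RtoC (Binomial.C n k) * RtoC (/ INR (k + 2)) *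
                      nu s (r - s + 1) (r + 1) k (n - k)) n).
  { rewrite <- sumC_mult_l. apply sumC_ext. intros k Hk. cbv beta.
    rewrite Eb1 by lia. unfold nu. replace (k + (n - k))%nat with n by lia.
    rewrite RtoC_inv by (rewrite plus_INR, I2; pose proof (pos_INR k); lra).
    rewrite plus_INR, I2, RtoC_plus. rewrite Hps1. unfold K.
    field. repeat split; auto. }
  transitivity (K * sum_n (fun k => RtoC (Binomial.C n k) * RtoC ((-1) ^ k) * RtoC (vw 2 k) *
                      nu s (r - s + 1) (r + 1) k 0) n).
  2:{ rewrite <- sumC_mult_l. apply sumC_ext. intros k Hk. cbv beta.
    rewrite Eb2. unfold nu. rewrite Nat.add_0_r. cbn [poch].
    rewrite vw2. rewrite RtoC_inv by (pose proof (pos_INR k); nra).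
    rewrite RtoC_mult, !RtoC_plus. rewrite Hps1. unfold K.
    field. repeat split; auto. }
  f_equal. apply comb_main; [lia|]. intros k l. apply nu_rec; [ring| auto].
Qed.
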